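(* Let $P$ be a $\mathcal{V}$-poset. If $P$ is not linearly ordered, then neither a greatest element nor a least element of $P$ (if it exists) is basic; if $P$ is a nonempty linearly ordered set, its least element is basic. Moreover, the status of elements does not change under the three operations generating $\mathcal{V}$-posets, except for linearly ordered sets: if $P'$ is obtained as a disjoint union of $\mathcal{V}$-posets, or by adding a new greatest element to a $\mathcal{V}$-poset $P$, or by adding a new least element to a $\mathcal{V}$-poset $P$ that is not linearly ordered, then every element of the original poset(s) that is basic (respectively non-basic, upper, lower) remains basic (respectively non-basic, upper, lower) in $P'$.
   Context: All posets are finite. A $\mathcal{V}$-poset is a poset that can be generated from the empty poset by repeatedly applying the operations: (1) disjoint union of $\mathcal{V}$-posets, (2) adding a new greatest element, (3) adding a new least element. An element $x$ of a $\mathcal{V}$-poset is basic if: (B.1) there are no two incomparable elements $u,v$ with $x>u$ and $x>v$; (B.2) there are no two incomparable elements $u,v$ with $x<u$ and $x<v$; (B.3) there is no element $u$ with $u<x$ such that for all $w\neq u,x$ one has ($u\ge w\iff x\ge w$) and ($u\le w\iff x\le w$). A non-basic element $u$ is an upper element if $u>b$ for some basic element $b$, and a lower element if $u<b$ for some basic element $b$. *)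

(* Defs.v *)
From HB Require Import structures.
From mathcomp Require Import ssreflect ssrfun ssrbool eqtype ssrnat seq choice fintype.
Set Implicit Arguments. Unset Strict Implicit. Unset Printing Implicit Defensive.

(* The V-posets are the structures
   generated (up to order isomorphism) by the operations below; they are
   automatically partial orders. *)
Record fposet := FPoset { car : finType; ple : rel car }.

Section Defs.
Variable P : fposet.
Notation le := (@ple P).

Definition plt (x y : car P) : bool := (x != y) && le x y.
Definition incomp (x y : car P) : Prop := ~~ le x y /\ ~~ le y x.

Definition linear : Prop := forall x y : car P, le x y \/ le y x.
Definition greatest (g : car P) : Prop := forall y, le y g.
Definition least (m : car P) : Prop := forall y, le m y.

Definition B1 (x : car P) : Prop :=
  ~ exists u v, [/\ plt u x, plt v x & incomp u v].
Definition B2 (x : car P) : Prop :=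
  ~ exists u v, [/\ plt x u, plt x v & incomp u v].
Definition B3 (x : car P) : Prop :=
  ~ exists u, plt u x /\
      forall w, w != u -> w != x ->
        ((le w u <-> le w x) /\ (le u w <-> le x w)).
Definition basic (x : car P) : Prop := [/\ B1 x, B2 x & B3 x].

Definition upper (u : car P) : Prop := ~ basic u /\ exists b, basic b /\ plt b u.
Definition lower (u : car P) : Prop := ~ basic u /\ exists b, basic b /\ plt u b.
End Defs.

Definition order_iso (P Q : fposet) : Prop :=
  exists f : car P -> car Q, bijective f /\
    forall x y, @ple P x y = @ple Q (f x) (f y).

Definition empty_poset : fposet := FPoset (fun (_ _ : void) => true).

Definition dunion (I : finType) (F : I -> fposet) : fposet :=
  @FPoset {i : I & car (F i)}
    (fun u v => (tag u == tag v) && @ple (F (tag u)) (tagged u) (tagged_as u v)).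

Definition dinj (I : finType) (F : I -> fposet) (i : I) (x : car (F i)) :
  car (dunion F) := Tagged (fun j => car (F j)) x.

Definition add_top (P : fposet) : fposet :=
  @FPoset (option (car P))
    (fun x y => match x, y with
                | _, None => true
                | None, Some _ => false
                | Some a, Some b => @ple P a b
                end).

Definition add_bot (P : fposet) : fposet :=
  @FPoset (option (car P))
    (fun x y => match x, y with
                | None, _ => true
                | Some _, None => false
                | Some a, Some b => @ple P a b
                end).

Inductive isV : fposet -> Prop :=
| isV_empty : isV empty_poset
| isV_union (I : finType) (F : I -> fposet) :
    (forall i, isV (F i)) -> isV (dunion F)
| isV_top P : isV P -> isV (add_top P)
| isV_bot P : isV P -> isV (add_bot P)
| isV_iso P Q : isV P -> order_iso P Q -> isV Q.

(* Main.v *)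
Require Import Defs.
From mathcomp Require Import ssreflect ssrfun ssrbool eqtype ssrnat seq choice fintype.
Set Implicit Arguments. Unset Strict Implicit.

Lemma nonlin_incomp (P : fposet) : ~ linear P -> exists u v : car P, incomp u v.
Proof.
move=> nl; case: (boolP [exists x : car P, [exists y : car P, ~~ ple x y && ~~ ple y x]]).
- by move=> /existsP [x /existsP [y /andP [h1 h2]]]; exists x, y.
- move=> /existsPn H; exfalso; apply: nl => x y.
  move: (H x) => /existsPn /(_ y); rewrite negb_and !negbK.
  by case/orP; auto.
Qed.

Lemma isV_po P : isV P ->
  (forall x : car P, ple x x) /\ (forall x y : car P, ple x y -> ple y x -> x = y).
Proof.
elim => {P}.
- by split; case.
- move=> I F _ IH; split.
  + by case=> i a /=; rewrite eqxx /= tagged_asE; exact: (IH i).1.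
  + case=> i a [j b] /=; case: (eqVneq i j) => [E|] //; subst j.
    rewrite /= !tagged_asE => h1 h2.
    by rewrite ((IH i).2 _ _ h1 h2).
- move=> P _ [r a]; split; first by case.
  case=> [x|] [y|] //= h1 h2; by rewrite (a x y h1 h2).
- move=> P _ [r a]; split; first by case.
  case=> [x|] [y|] //= h1 h2; by rewrite (a x y h1 h2).
- move=> P Q _ [r a] [f [[g fg gf] hf]]; split.
  + by move=> y; rewrite -(gf y) -hf.
  + move=> y1 y2; rewrite -(gf y1) -(gf y2) -!hf => h1 h2.
    by rewrite (a _ _ h1 h2).
Qed.

Section Embed.
Variables (P Q : fposet) (f : car P -> car Q).
Hypothesis finj : injective f.
Hypothesis fle : forall a b, ple (f a) (f b) = ple a b.

Lemma flt a b : plt (f a) (f b) = plt a b.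
Proof. by rewrite /plt fle (inj_eq finj). Qed.

Lemma finc a b : incomp (f a) (f b) <-> incomp a b.
Proof. by rewrite /incomp !fle. Qed.

Definition inim w := exists a, w = f a.
Definition allcomp (w : car Q) := forall z, ple w z || ple z w.

Lemma allcomp_ninc w z : allcomp w -> ~ incomp w z /\ ~ incomp z w.
Proof.
move=> H; split=> [[h1 h2]|[h1 h2]]; move: (H z);
  by rewrite (negbTE h1) (negbTE h2).
Qed.

Definition cond3 (u y : car Q) := forall w, w != u -> w != y ->
        ((ple w u <-> ple w y) /\ (ple u w <-> ple y w)).

Variable x : car P.

Lemma B1_to (H1 : forall w, plt w (f x) -> inim w \/ allcomp w) : B1 x -> B1 (f x).
Proof.
move=> b [u [v [hu hv huv]]]; apply: b.
case: (H1 _ hu) => [[a E]|cu]; last first.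
  by exfalso; have [h _] := allcomp_ninc v cu; exact: h huv.
case: (H1 _ hv) => [[c E']|cv]; last first.
  by exfalso; have [_ h] := allcomp_ninc u cv; exact: h huv.
subst u v; exists a, c; split; rewrite -?flt //; exact/finc.
Qed.

Lemma B1_from : B1 (f x) -> B1 x.
Proof.
move=> b [a [c [ha hc hac]]]; apply: b; exists (f a), (f c).
by rewrite !flt; split => //; apply/finc.
Qed.

Lemma B2_to (H2 : forall w, plt (f x) w -> inim w \/ allcomp w) : B2 x -> B2 (f x).
Proof.
move=> b [u [v [hu hv huv]]]; apply: b.
case: (H2 _ hu) => [[a E]|cu]; last first.
  by exfalso; have [h _] := allcomp_ninc v cu; exact: h huv.
case: (H2 _ hv) => [[c E']|cv]; last first.
  by exfalso; have [_ h] := allcomp_ninc u cv; exact: h huv.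
subst u v; exists a, c; split; rewrite -?flt //; exact/finc.
Qed.

Lemma B2_from : B2 (f x) -> B2 x.
Proof.
move=> b [a [c [ha hc hac]]]; apply: b; exists (f a), (f c).
by rewrite !flt; split => //; apply/finc.
Qed.

Lemma B3_to (H3 : forall u, plt u (f x) -> cond3 u (f x) -> inim u) : B3 x -> B3 (f x).
Proof.
move=> b [u [hu hc]]; case: (H3 u hu hc) => a E; subst u; apply: b.
exists a; split; first by rewrite -flt.
move=> w wa wx; have := hc (f w); rewrite !fle !(inj_eq finj).
exact.
Qed.

Lemma B3_from (Hout : forall w, ~ inim w -> forall a b,
     ple w (f a) = ple w (f b) /\ ple (f a) w = ple (f b) w) : B3 (f x) -> B3 x.
Proof.
move=> b [a [ha hc]]; apply: b; exists (f a); split; first by rewrite flt.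
move=> w wa wx.
case: (boolP [exists c, w == f c]).
- move=> /existsP [c /eqP E]; subst w; rewrite !fle.
  rewrite !(inj_eq finj) in wa wx; exact: hc.
- move=> /existsPn nin; have ni : ~ inim w.
    by move=> [c E]; move: (nin c); rewrite E eqxx.
  by case: (Hout w ni a x) => -> ->.
Qed.

End Embed.

Lemma status (P Q : fposet) (f : car P -> car Q) (finj : injective f)
  (fle : forall a b, ple (f a) (f b) = ple a b)
  (Hb : forall y, basic y <-> basic (f y)) x :
  (upper x -> upper (f x)) /\ (lower x -> lower (f x)).
Proof.
split.
- move=> [nb [b [bb hb]]]; split; first by move/Hb.
  by exists (f b); split; [exact/Hb | rewrite flt].
- move=> [nb [b [bb hb]]]; split; first by move/Hb.
  by exists (f b); split; [exact/Hb | rewrite flt].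
Qed.

Lemma basic_iff (P Q : fposet) (f : car P -> car Q) (finj : injective f)
  (fle : forall a b, ple (f a) (f b) = ple a b) x
  (H1 : forall w, plt w (f x) -> inim f w \/ allcomp w)
  (H2 : forall w, plt (f x) w -> inim f w \/ allcomp w)
  (H3 : basic x -> forall u, plt u (f x) -> cond3 u (f x) -> inim f u)
  (Hout : forall w, ~ inim f w -> forall a b,
     ple w (f a) = ple w (f b) /\ ple (f a) w = ple (f b) w) :
  basic x <-> basic (f x).
Proof.
split.
- move=> bx; have [b1 b2 b3] := bx; split.
  + exact: B1_to.
  + exact: B2_to.
  + exact: (B3_to finj fle (H3 bx)).
- move=> [b1 b2 b3]; split.
  + exact: (B1_from finj fle).
  + exact: (B2_from finj fle).
  + exact: (B3_from finj fle Hout).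
Qed.

Lemma dinj_inj (I : finType) (F : I -> fposet) i : injective (@dinj I F i).
Proof. by move=> a b /(congr1 (tagged_as (dinj a))); rewrite !tagged_asE. Qed.

Lemma dinj_le (I : finType) (F : I -> fposet) i (a b : car (F i)) :
  @ple (dunion F) (dinj a) (dinj b) = ple a b.
Proof. by rewrite /= eqxx /= tagged_asE. Qed.

Theorem lemma3p6 :
  (* greatest / least elements of a non-linear V-poset are not basic *)
  (forall P : fposet, isV P -> ~ linear P ->
     (forall g : car P, greatest g -> ~ basic g) /\
     (forall m : car P, least m -> ~ basic m)) /\
  (* the least element of a nonempty linearly ordered V-poset is basic *)
  (forall P : fposet, isV P -> linear P ->
     forall m : car P, least m -> basic m) /\
  (* disjoint union of V-posets preserves the status of elements *)
  (forall (I : finType) (F : I -> fposet), (forall i, isV (F i)) ->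
     forall (i : I) (x : car (F i)),
       (basic x <-> basic (dinj x)) /\
       (upper x -> upper (dinj x)) /\
       (lower x -> lower (dinj x))) /\
  (* adding a new greatest element preserves the status of elements *)
  (forall P : fposet, isV P ->
     forall x : car P,
       (basic x <-> @basic (add_top P) (Some x)) /\
       (upper x -> @upper (add_top P) (Some x)) /\
       (lower x -> @lower (add_top P) (Some x))) /\
  (* adding a new least element to a non-linear V-poset preserves status *)
  (forall P : fposet, isV P -> ~ linear P ->
     forall x : car P,
       (basic x <-> @basic (add_bot P) (Some x)) /\
       (upper x -> @upper (add_bot P) (Some x)) /\
       (lower x -> @lower (add_bot P) (Some x))).
Proof.
split.
  move=> P _ nl; have [u [v [huv hvu]]] := nonlin_incomp nl; split.
  - move=> g gg [b1 _ _]; apply: b1; exists u, v; split => //.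
    + rewrite /plt gg andbT; apply/eqP => E; subst g.
      by move: hvu; rewrite gg.
    + rewrite /plt gg andbT; apply/eqP => E; subst g.
      by move: huv; rewrite gg.
  - move=> m lm [_ b2 _]; apply: b2; exists u, v; split => //.
    + rewrite /plt lm andbT; apply/eqP => E; subst m.
      by move: huv; rewrite lm.
    + rewrite /plt lm andbT; apply/eqP => E; subst m.
      by move: hvu; rewrite lm.
split.
  move=> P vP lin m lm; split.
  - move=> [u [v [_ _ [h1 h2]]]]; case: (lin u v) => h.
    + by rewrite h in h1.
    + by rewrite h in h2.
  - move=> [u [v [_ _ [h1 h2]]]]; case: (lin u v) => h.
    + by rewrite h in h1.
    + by rewrite h in h2.
  - move=> [u [/andP [ne hu] _]].
    by move: ne; rewrite ((isV_po vP).2 _ _ hu (lm u)) eqxx.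
split.
  move=> I F _ i.
  have Hb : forall x : car (F i), basic x <-> basic (dinj x).
    move=> x; apply: basic_iff.
    - exact: dinj_inj.
    - exact: dinj_le.
    - case=> j b /andP [_]; case: (eqVneq j i) => [E|ne].
        by subst; left; exists b.
      by rewrite /= (negbTE ne).
    - case=> j b /andP [_]; case: (eqVneq i j) => [E|ne].
        by subst; left; exists b.
      by rewrite /= (negbTE ne).
    - move=> _; case=> j b /andP [_]; case: (eqVneq j i) => [E|ne].
        by subst; exists b.
      by rewrite /= (negbTE ne).
    - case=> j b ni a c; case: (eqVneq j i) => [E|ne].
        by subst; exfalso; apply: ni; exists b.
      by rewrite /= (negbTE ne) eq_sym (negbTE ne).
  move=> x; split; first exact: Hb.
  exact: (status (@dinj_inj I F i) (@dinj_le I F i) Hb).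
split.
  move=> P vP.
  have finj : injective (@Some (car P)) by move=> a b [].
  have fle : forall a b : car P, @ple (add_top P) (Some a) (Some b) = ple a b by [].
  have Hb : forall x : car P, basic x <-> @basic (add_top P) (Some x).
    move=> x; apply: basic_iff => //.
    - by case=> [b|] // _; left; exists b.
    - case=> [b|] _; first by left; exists b.
      by right; case.
    - by move=> _ [b|] // _ _; exists b.
    - case=> [b|] ni a c //; by exfalso; apply: ni; exists b.
  move=> x; split; first exact: Hb.
  exact: (@status P (add_top P) Some finj fle Hb).
move=> P vP nl.
have [refl _] := isV_po vP.
have finj : injective (@Some (car P)) by move=> a b [].
have fle : forall a b : car P, @ple (add_bot P) (Some a) (Some b) = ple a b by [].
have Hb : forall x : car P, basic x <-> @basic (add_bot P) (Some x).
  move=> x; apply: basic_iff => //.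
  - case=> [b|] _; first by left; exists b.
    by right; case.
  - by case=> [b|] // _; left; exists b.
  - move=> [_ b2 _] [b|] _ hc; first by exists b.
    exfalso.
    have hx : forall y, y != x -> ple x y.
      move=> y ne; have := hc (Some y) isT; rewrite (inj_eq finj).
      by case/(_ ne) => _ [h _]; exact: h.
    have [a [c [hac hca]]] := nonlin_incomp nl.
    have ax : a != x.
      apply/eqP => E; subst a; case: (eqVneq c x) => [E|cx].
        by subst c; rewrite refl in hac.
      by rewrite hx in hac.
    have cx : c != x.
      apply/eqP => E; subst c.
      by rewrite hx in hca.
    apply: b2; exists a, c; split => //.
    + by rewrite /plt eq_sym ax hx.
    + by rewrite /plt eq_sym cx hx.
  - case=> [b|] ni a c //; by exfalso; apply: ni; exists b.
move=> x; split; first exact: Hb.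
exact: (@status P (add_bot P) Some finj fle Hb).
Qed.
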